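(* Let $\lambda$ be a nonzero real number, $r$ a nonnegative integer, and $p(x)\in\mathbb{C}[x]$ of degree $n$. Let $g(t)=\frac{\lambda(e^t-1)}{e^{\lambda t}-1}$ and $f(t)=\frac{1}{\lambda}(e^{\lambda t}-1)$. Then: (a) If $r>n$, $$p(x)=\sum_{k=0}^{n}\frac{1}{k!}\sum_{j=0}^{k}(-1)^{k-j}\binom{k}{j}\big(g(t)^{r-k}p\big)(j)\;\beta^{(r)}_{k,\lambda}(x).$$ (b) If $r\le n$, $$p(x)=\sum_{k=0}^{r-1}\frac{1}{k!}\sum_{j=0}^{k}(-1)^{k-j}\binom{k}{j}\big(g(t)^{r-k}p\big)(j)\;\beta^{(r)}_{k,\lambda}(x)+\sum_{k=r}^{n}\frac{1}{k!}\sum_{j=0}^{r}(-1)^{r-j}\binom{r}{j}\big(f(t)^{k-r}p\big)(j)\;\beta^{(r)}_{k,\lambda}(x).$$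
   Context: Higher-order degenerate Bernoulli polynomials $\beta^{(r)}_{n,\lambda}(x)$ are defined by $\Big(\frac{t}{(1+\lambda t)^{1/\lambda}-1}\Big)^r(1+\lambda t)^{x/\lambda}=\sum_{n\ge0}\beta^{(r)}_{n,\lambda}(x)\frac{t^n}{n!}$. A formal power series $h(t)=\sum_{k\ge0}c_k\frac{t^k}{k!}$ acts on polynomials as the differential operator $h(t)x^m=\sum_{k=0}^m\binom{m}{k}c_kx^{m-k}$ (i.e. $t=d/dx$); $(h(t)p)(j)$ denotes the resulting polynomial evaluated at $x=j$. *)

(* Defs.v *)
From HB Require Import structures.
From mathcomp Require Import all_boot all_order all_algebra.
From mathcomp Require Import reals.
From mathcomp Require Export complex.

Set Implicit Arguments.
Unset Strict Implicit.
Unset Printing Implicit Defensive.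

Import Order.TTheory GRing.Theory Num.Theory.
Local Open Scope ring_scope.

(* Formal power series a(t) = \sum_n a n * t^n  (ORDINARY coefficients). *)
Definition fps (K : Type) := nat -> K.

Section FPS.
Variable K : comUnitRingType.

Definition fps_one : fps K := fun n => (n == 0)%:R.
Definition fps_sub (a b : fps K) : fps K := fun n => a n - b n.
Definition fps_scale (c : K) (a : fps K) : fps K := fun n => c * a n.
Definition fps_mul (a b : fps K) : fps K :=
  fun n => \sum_(i < n.+1) a i * b (n - i)%N.
Definition fps_pow (a : fps K) (k : nat) : fps K := iter k (fps_mul a) fps_one.
(* division by t (for series with vanishing constant term) *)
Definition fps_divt (a : fps K) : fps K := fun n => a n.+1.
Definition fps_exp (c : K) : fps K := fun n => c ^+ n / n`!%:R.
(* (1 + lam t)^a := \sum_n lam^n binom(a, n) t^n  (generalized binomial series) *)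
Definition fps_binpow (lam a : K) : fps K :=
  fun n => lam ^+ n * (\prod_(i < n) (a - i%:R)) / n`!%:R.

Fixpoint fps_inv_seq (a : fps K) (n : nat) : seq K :=
  match n with
  | 0 => [:: (a 0%N)^-1]
  | m.+1 => let s := fps_inv_seq a m in
            rcons s (- (a 0%N)^-1 *
                     \sum_(1 <= i < m.+2) a i * nth 0 s (m.+1 - i)%N)
  end.
Definition fps_inv (a : fps K) : fps K := fun n => nth 0 (fps_inv_seq a n) n.

End FPS.

(* Action of a power series h(t) = \sum_k h k t^k on polynomials, t = d/dx:
   h(t) p = \sum_k h k * p^(k); only k < size p contribute. *)
Definition fps_act (F : fieldType) (h : fps F) (p : {poly F}) : {poly F} :=
  \sum_(k < size p) h k *: p^`(k).

Section Bernoulli.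
Variable R : realType.
Local Notation C := (R[i]).
Variable lam : R.
Local Notation lamC := ((lam%:C)%C : C).

Definition bern_kernel : fps C :=
  fps_inv (fps_divt (fps_sub (fps_binpow lamC lamC^-1) (@fps_one C))).

Definition deg_exp_x : fps {poly C} :=
  fps_binpow (lamC%:P) (lamC^-1 *: 'X).

(* higher-order degenerate Bernoulli polynomials:
   (t/((1+lam t)^{1/lam}-1))^r (1+lam t)^{x/lam} = \sum_n beta r n (x) t^n/n! *)
Definition deg_bernoulli (r n : nat) : {poly C} :=
  n`!%:R *: fps_mul (fun k => (fps_pow bern_kernel r k)%:P) deg_exp_x n.

(* g(t) = lam (e^t - 1) / (e^{lam t} - 1) = [lam (e^t-1)/t] / [(e^{lam t}-1)/t] *)
Definition g_series : fps C :=
  fps_mul (fps_scale lamC (fps_divt (fps_sub (fps_exp 1) (@fps_one C))))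
          (fps_inv (fps_divt (fps_sub (fps_exp lamC) (@fps_one C)))).

Definition f_series : fps C :=
  fps_scale lamC^-1 (fps_sub (fps_exp lamC) (@fps_one C)).

End Bernoulli.

(* Main.v *)
Require Import Defs.
From HB Require Import structures.
From mathcomp Require Import all_boot all_order all_algebra.
From mathcomp Require Import reals complex.
From mathcomp Require Import ring.
Import Order.TTheory GRing.Theory Num.Theory.
Local Open Scope ring_scope.
Set Implicit Arguments.
Unset Strict Implicit.
Unset Printing Implicit Defensive.



Section Act.
Variable F : numFieldType.
Implicit Types (h q u v : {poly F}).

Definition S m h q := \sum_(k < m) h`_k *: q^`(k).
Definition actQ h q := S (size h) h q.

Lemma S_widen m m' h q : (m <= m')%N -> ((size h <= m) || (size q <= m))%N ->
  S m h q = S m' h q.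
Proof.
move=> le hs; rewrite /S -(subnKC le) big_split_ord /=.
rewrite [X in _ + X]big1 ?addr0 // => i _.
case/orP: hs => hs.
  by rewrite nth_default ?scale0r // (leq_trans hs) ?leq_addr.
by rewrite derivn_poly0 ?scaler0 // (leq_trans hs) ?leq_addr.
Qed.

Lemma actQE m h q : ((size h <= m) || (size q <= m))%N -> actQ h q = S m h q.
Proof.
move=> hs; rewrite /actQ (@S_widen (size h) (size h + m)) ?leq_addr ?leqnn //.
by rewrite addnC; symmetry; apply: S_widen; rewrite ?leq_addr.
Qed.

Lemma actQDl h1 h2 q : actQ (h1 + h2) q = actQ h1 q + actQ h2 q.
Proof.
rewrite !(@actQE (size q)) ?leqnn ?orbT // /S -big_split; apply: eq_bigr => i _.
by rewrite coefD scalerDl.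
Qed.

Lemma actQZl c h q : actQ (c *: h) q = c *: actQ h q.
Proof.
rewrite !(@actQE (size q)) ?leqnn ?orbT // /S scaler_sumr; apply: eq_bigr => i _.
by rewrite coefZ scalerA.
Qed.

Lemma actQC c q : actQ c%:P q = c *: q.
Proof.
by rewrite (@actQE 1) ?size_polyC_leq1 // /S big_ord1 coefC /=.
Qed.

Lemma actQ0l q : actQ 0 q = 0.
Proof. by rewrite /actQ size_poly0 /S big_ord0. Qed.

Lemma actQDr h u v : actQ h (u + v) = actQ h u + actQ h v.
Proof.
rewrite !(@actQE (size h)) ?leqnn // /S -big_split; apply: eq_bigr => i _.
by rewrite derivnD scalerDr.
Qed.

Lemma actQZr c h u : actQ h (c *: u) = c *: actQ h u.
Proof.
rewrite !(@actQE (size h)) ?leqnn // /S scaler_sumr; apply: eq_bigr => i _.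
by rewrite derivnZ !scalerA mulrC.
Qed.

Lemma actQ0r h : actQ h 0 = 0.
Proof. by rewrite /actQ /S big1 // => i _; rewrite derivn_poly0 ?size_poly0 ?scaler0. Qed.

Lemma actQBr h u v : actQ h (u - v) = actQ h u - actQ h v.
Proof. by rewrite actQDr -scaleN1r actQZr scaleN1r. Qed.

Lemma actQ_sumr h I (r : seq I) (P : pred I) (E : I -> {poly F}) :
  actQ h (\sum_(i <- r | P i) E i) = \sum_(i <- r | P i) actQ h (E i).
Proof. exact: (big_morph _ (actQDr h) (actQ0r h)). Qed.

Lemma size_derivn_le q k : (size q^`(k) <= size q)%N.
Proof.
elim: k => [|k IH]; first by rewrite derivn0.
rewrite derivnS; apply: leq_trans IH.
have [->|nz] := eqVneq (q^`(k)) 0; first by rewrite deriv0.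
exact/ltnW/lt_size_deriv.
Qed.

Lemma actQ_deriv h q : actQ h q^`() = (actQ h q)^`().
Proof.
rewrite !(@actQE (size h)) ?leqnn // /S.
rewrite (big_morph _ (@derivD _) (@deriv0 _)); apply: eq_bigr => i _.
by rewrite derivZ -derivSn derivnS.
Qed.

Lemma actQX h q : actQ ('X * h) q = actQ h q^`().
Proof.
rewrite (@actQE (size q).+1) ?leqnSn ?orbT // (@actQE (size q)); last first.
  by rewrite -derivn1 size_derivn_le orbT.
by rewrite /S big_ord_recl coefXM /= scale0r add0r; apply: eq_bigr => i _;
  rewrite coefXM /= -derivSn.
Qed.

Lemma actQM h1 h2 q : actQ (h1 * h2) q = actQ h1 (actQ h2 q).
Proof.
elim/poly_ind: h1 h2 q => [|h c IH] h2 q; first by rewrite mul0r !actQ0l.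
rewrite mulrDl -mulrA actQDl IH mul_polyC actQZl actQX.
rewrite actQDl actQC (mulrC h) actQX -actQ_deriv.
by [].
Qed.

Lemma actQ_exp h k q : actQ (h ^+ k) q = iter k (actQ h) q.
Proof.
elim: k q => [|k IH] q; first by rewrite expr0 -polyC1 actQC scale1r.
by rewrite exprS actQM IH.
Qed.

Lemma actQ_comm h1 h2 q : actQ h1 (actQ h2 q) = actQ h2 (actQ h1 q).
Proof. by rewrite -!actQM mulrC. Qed.

Lemma actQ_suml I (r : seq I) (P : pred I) (E : I -> {poly F}) q :
  actQ (\sum_(i <- r | P i) E i) q = \sum_(i <- r | P i) actQ (E i) q.
Proof. exact: (big_morph (fun h => actQ h q) (fun a b => actQDl a b q) (actQ0l q)). Qed.

Lemma actQMnl h k q : actQ (h *+ k) q = actQ h q *+ k.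
Proof. by rewrite -[h *+ k]scaler_nat actQZl scaler_nat. Qed.

Lemma size_actQ_le h q : (size (actQ h q) <= size q)%N.
Proof.
rewrite /actQ /S; apply: (big_ind (fun u => size u <= size q)%N) => //.
- by rewrite size_poly0.
- by move=> u v hu hv; rewrite (leq_trans (size_polyD _ _)) // geq_max hu hv.
- by move=> i _; rewrite (leq_trans (size_scale_leq _ _)) ?size_derivn_le.
Qed.

Lemma size_deriv_eq q : size q^`() = (size q).-1.
Proof.
have [->|nz] := eqVneq q 0; first by rewrite deriv0 size_poly0.
apply/eqP; rewrite eqn_leq; apply/andP; split.
  by rewrite -ltnS -(polySpred nz) lt_size_deriv.
move: (polySpred nz) (nz); set d := (size q).-1 => hs _.
case: d hs => [|d] hs //=.
case: leqP => // hle.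
have : q^`()`_d = 0 by rewrite nth_default.
rewrite coef_deriv => /eqP; rewrite mulrn_eq0 /= => /eqP hq.
have : lead_coef q != 0 by rewrite lead_coef_eq0.
by rewrite lead_coefE hs /= hq eqxx.
Qed.

Definition Xdiv h := \poly_(i < size h) h`_i.+1.

Lemma coef_Xdiv h i : (Xdiv h)`_i = h`_i.+1.
Proof.
rewrite coef_poly; case: ltnP => // hi.
by rewrite nth_default // (leq_trans hi).
Qed.

Lemma XdivE h : h = 'X * Xdiv h + (h`_0)%:P.
Proof.
apply/polyP => i; rewrite coefD coefXM coefC; case: i => [|i] /=; first by rewrite add0r.
by rewrite addr0 coef_Xdiv.
Qed.

Lemma size_actQ_eq h q : h`_0 != 0 -> size (actQ h q) = size q.
Proof.
move=> h0.
have [->|nz] := eqVneq q 0; first by rewrite actQ0r.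
rewrite {1}(XdivE h) actQDl actQX actQC addrC size_polyDl size_scale //.
by rewrite (leq_ltn_trans (size_actQ_le _ _)) // lt_size_deriv.
Qed.

Lemma size_actQ_pred h q : h`_0 = 0 -> h`_1 != 0 -> size (actQ h q) = (size q).-1.
Proof.
move=> h0 h1; rewrite {1}(XdivE h) h0 addr0 actQX size_actQ_eq ?coef_Xdiv //.
exact: size_deriv_eq.
Qed.

Lemma taylorS m c q : (size q <= m)%N ->
  \sum_(k < m) (c ^+ k / k`!%:R) *: q^`(k) = q \Po ('X + c%:P).
Proof.
move=> hq.
rewrite /comp_poly (@nderiv_taylor_wide _ m _ _ _ (mulrC _ _)) ?size_map_polyC //.
apply: eq_bigr => k _.
have hX u : (u^:P).['X] = u := comp_polyXr u.
rewrite nderivn_map hX nderivn_def -polyC_exp (mulrC q^`N(k)) mul_polyC.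
rewrite -scaler_nat scalerA divfK // pnatr_eq0 -lt0n fact_gt0 //.
Qed.

Definition eqN N h h' := forall i, (i < N)%N -> h`_i = h'`_i.

Lemma eqN_refl N h : eqN N h h. Proof. by []. Qed.
Lemma eqN_sym N h h' : eqN N h h' -> eqN N h' h.
Proof. by move=> e i hi; rewrite e. Qed.
Lemma eqN_trans N h1 h2 h3 : eqN N h1 h2 -> eqN N h2 h3 -> eqN N h1 h3.
Proof. by move=> e1 e2 i hi; rewrite e1 ?e2. Qed.
Lemma eqN_eq N h h' : h = h' -> eqN N h h'.
Proof. by move=> ->. Qed.

Lemma eqNM N a a' b b' : eqN N a a' -> eqN N b b' -> eqN N (a * b) (a' * b').
Proof.
move=> ea eb i hi; rewrite !coefM; apply: eq_bigr => j _.
have hj : (j < N)%N by apply: leq_ltn_trans hi; rewrite -ltnS.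
by rewrite ea // eb // (leq_ltn_trans (leq_subr _ _) hi).
Qed.

Lemma eqNX N a a' k : eqN N a a' -> eqN N (a ^+ k) (a' ^+ k).
Proof.
move=> e; elim: k => [|k IH]; first by rewrite !expr0.
by rewrite !exprS; apply: eqNM.
Qed.

Lemma eqND N a a' b b' : eqN N a a' -> eqN N b b' -> eqN N (a + b) (a' + b').
Proof. by move=> ea eb i hi; rewrite !coefD ea ?eb. Qed.

Lemma eqNZ N c a a' : eqN N a a' -> eqN N (c *: a) (c *: a').
Proof. by move=> ea i hi; rewrite !coefZ ea. Qed.

Lemma actQ_eqN N h h' q : eqN N h h' -> (size q <= N)%N -> actQ h q = actQ h' q.
Proof.
move=> e hq; rewrite !(@actQE N) ?hq ?orbT //; apply: eq_bigr => i _.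
by rewrite e.
Qed.

Definition T N (a : fps F) : {poly F} := \poly_(i < N) a i.

Lemma coefT N a i : (i < N)%N -> (T N a)`_i = a i.
Proof. by move=> hi; rewrite coef_poly hi. Qed.

Lemma fps_actE N a q : (size q <= N)%N -> fps_act a q = actQ (T N a) q.
Proof.
move=> hq; rewrite (@actQE (size q)) ?leqnn ?orbT // /S /fps_act.
apply: eq_bigr => i _; rewrite coefT //.
exact: leq_trans (ltn_ord i) hq.
Qed.

Lemma actQ_T N a q : (size q <= N)%N -> actQ (T N a) q = \sum_(k < N) a k *: q^`(k).
Proof.
move=> hq; rewrite (@actQE N) ?hq ?orbT // /S; apply: eq_bigr => i _.
by rewrite coefT.
Qed.

Lemma T_mul N a b : eqN N (T N a * T N b) (T N (fps_mul a b)).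
Proof.
move=> i hi; rewrite coefM coefT // /fps_mul; apply: eq_bigr => j _.
have hj : (j < N)%N by apply: leq_ltn_trans hi; rewrite -ltnS.
by rewrite !coefT // (leq_ltn_trans (leq_subr _ _) hi).
Qed.

Lemma T_pow N a k : eqN N (T N a ^+ k) (T N (fps_pow a k)).
Proof.
elim: k => [|k IH].
  by move=> i hi; rewrite expr0 coefT // coef1 /fps_pow /= /fps_one.
rewrite exprS; exact: (eqN_trans (eqNM (@eqN_refl _ _) IH) (@T_mul _ _ _)).
Qed.

Lemma T_scale N c a : T N (fps_scale c a) = c *: T N a.
Proof. by apply/polyP => i; rewrite coefZ !coef_poly; case: ifP; rewrite ?mulr0. Qed.

Lemma T_sub N a b : T N (fps_sub a b) = T N a - T N b.
Proof. by apply/polyP => i; rewrite coefB !coef_poly; case: ifP; rewrite ?subr0. Qed.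

Lemma T_one N : (0 < N)%N -> T N (@fps_one F) = 1.
Proof.
move=> hN; apply/polyP => i; rewrite coef1 coef_poly /fps_one.
case: ifP => // hi; case: i hi => //= hi; by rewrite hN in hi.
Qed.

Lemma T_divt N a : a 0%N = 0 -> eqN N ('X * T N (fps_divt a)) (T N a).
Proof.
move=> a0 i hi; rewrite coefXM; case: i hi => [|i] hi /=; first by rewrite coefT // a0.
by rewrite !coefT // ltnW.
Qed.

Lemma size_inv_seq (a : fps F) n : size (fps_inv_seq a n) = n.+1.
Proof. by elim: n => [|n IH] //=; rewrite size_rcons IH. Qed.

Lemma nth_inv_seq (a : fps F) n i : (i <= n)%N -> nth 0 (fps_inv_seq a n) i = fps_inv a i.
Proof.
elim: n => [|n IH] hi; first by move: hi; rewrite leqn0 => /eqP ->.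
rewrite leq_eqVlt in hi; case/orP: hi => [/eqP ->|hi] //.
by rewrite /= nth_rcons size_inv_seq hi IH.
Qed.

Lemma fps_inv_rec (a : fps F) n : fps_inv a n.+1 =
  - (a 0%N)^-1 * \sum_(i < n.+1) a i.+1 * fps_inv a (n - i)%N.
Proof.
rewrite {1}/fps_inv /= nth_rcons size_inv_seq ltnn eqxx; congr (_ * _).
rewrite big_add1 /= big_mkord; apply: eq_bigr => i _.
by rewrite nth_inv_seq // subSS leq_subr.
Qed.

Lemma fps_mul_inv (a : fps F) n : a 0%N != 0 -> fps_mul a (fps_inv a) n = (n == 0)%:R.
Proof.
move=> a0; case: n => [|n]; first by rewrite /fps_mul big_ord1 /fps_inv /= mulfV.
rewrite /fps_mul big_ord_recl /= subn0 fps_inv_rec mulrA mulrN mulfV // mulN1r.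
by apply/eqP; rewrite addrC subr_eq0; apply/eqP; apply: eq_bigr => i _; rewrite /bump /= add1n subSS.
Qed.

Lemma T_inv N (a : fps F) : a 0%N != 0 -> eqN N (T N a * T N (fps_inv a)) 1.
Proof.
move=> a0; apply: (eqN_trans (@T_mul _ _ _)) => i hi.
by rewrite coefT // fps_mul_inv // coef1.
Qed.

End Act.



Section Vd.
Variable Rg : comNzRingType.
Definition Pf (z : Rg) k := \prod_(i < k) (z - i%:R).

Lemma Pf0 z : Pf z 0 = 1. Proof. by rewrite /Pf big_ord0. Qed.
Lemma PfS z k : Pf z k.+1 = Pf z k * (z - k%:R).
Proof. by rewrite /Pf big_ord_recr. Qed.
Lemma PfS1 z k : Pf (z + 1) k.+1 = (z + 1) * Pf z k.
Proof.
rewrite /Pf big_ord_recl subr0; congr (_ * _); apply: eq_bigr => i _.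
by rewrite lift0 -natr1 opprD addrACA subrr addr0.
Qed.

Lemma vandermonde y a k :
  Pf (y + a) k = \sum_(n < k.+1) (Pf a n * Pf y (k - n)) *+ 'C(k, n).
Proof.
elim: k => [|k IH]; first by rewrite big_ord1 !Pf0 mulr1.
rewrite PfS IH big_distrl /=.
have step (n : 'I_k.+1) : (Pf a n * Pf y (k - n) *+ 'C(k, n)) * (y + a - k%:R) =
   (Pf a n * Pf y (k - n).+1) *+ 'C(k, n) + (Pf a n.+1 * Pf y (k - n)) *+ 'C(k, n).
  have hn : (n <= k)%N by rewrite -ltnS.
  rewrite !PfS; have -> : (k%:R : Rg) = (k - n)%N%:R + n%:R by rewrite -natrD subnK.
  rewrite mulrnAl -mulrnDl; congr (_ *+ _).
  move: (Pf a n) (Pf y (k - n)) ((k - n)%N%:R : Rg) (n%:R : Rg) => A B M Nn.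
  ring.
rewrite (eq_bigr _ (fun n _ => step n)) big_split /=.
rewrite [in RHS]big_ord_recl subn0 bin0 Pf0 mul1r mulr1n.
rewrite [in RHS](eq_bigr (fun n : 'I_k.+1 => (Pf a n.+1 * Pf y (k - n)) *+ 'C(k, n.+1) +
                   (Pf a n.+1 * Pf y (k - n)) *+ 'C(k, n))); last first.
  by move=> n _; rewrite lift0 subSS binS mulrnDr.
rewrite [in RHS]big_split /= addrA; congr (_ + _).
rewrite big_ord_recl subn0 bin0 Pf0 mul1r mulr1n; congr (_ + _).
rewrite big_ord_recr /= bin_small // mulr0n addr0; apply: eq_bigr => n _.
by rewrite /bump leq0n add1n subnSK.
Qed.
Lemma perm6 (a1 a b c a2 a3 : Rg) :
  a1 * a * c * a2 * a3 * b = a1 * a2 * a3 * a * b * c.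
Proof. ring. Qed.
End Vd.

Section Conv.
Variable F : numFieldType.

Definition conv (b : nat -> F) (E : nat -> {poly F}) k :=
  \sum_(i < k.+1) b i *: E (k - i)%N.

Lemma conv_assoc a b E k :
  conv a (fun j => conv b E j) k =
  conv (fun m => \sum_(i < m.+1) a i * b (m - i)%N) E k.
Proof.
rewrite /conv.
transitivity (\sum_(0 <= i < k.+1) \sum_(0 <= m < k.+1)
   (if (i <= m)%N then (a i * b (m - i)%N) *: E (k - m)%N else 0)); last first.
  rewrite exchange_big_nat big_mkord; apply: eq_bigr => m _.
  rewrite scaler_suml big_mkord.
  rewrite (big_ord_widen _ (fun i => (a i * b (m - i)%N) *: E (k - m)%N) (ltn_ord m)).
  rewrite [in RHS]big_mkcond; apply: eq_bigr => i _ /=.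
  by rewrite ltnS.
rewrite big_mkord; apply: eq_bigr => i _.
have hi : (i <= k)%N by rewrite -ltnS.
rewrite (@big_cat_nat _ _ _ i 0 k.+1) //=; last by rewrite ltnW.
rewrite [X in _ = X + _]big_nat_cond [X in _ = X + _]big1 ?add0r; last first.
  by move=> m /andP [/andP [_ hm] _]; rewrite leqNgt hm.
rewrite (@big_addn _ _ _ 0 k.+1 i) subSn // big_mkord scaler_sumr.
apply: eq_bigr => j _; rewrite leq_addl addnK scalerA.
by rewrite addnC subnDA.
Qed.
End Conv.



Section Main.
Variable R : realType.
Variable lam : R.
Hypothesis hlam : lam != 0.
Local Notation C := (R[i]).
Local Notation l := ((lam%:C)%C : C).
Local Notation e := (deg_exp_x lam).

Lemma hl : l != 0.
Proof. by apply: contra hlam => /eqP h; apply/eqP; exact: complexI h. Qed.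

Lemma fact_neq0 k : (k`!%:R : C) != 0.
Proof. by rewrite pnatr_eq0 -lt0n fact_gt0. Qed.

Definition ce k : C := l ^+ k / k`!%:R.
Definition z : {poly C} := l^-1 *: 'X.

Lemma eE k : e k = ce k *: Pf z k.
Proof.
rewrite /deg_exp_x /fps_binpow /ce /z /Pf.
rewrite -polyC_exp -(rmorph_nat (@polyC C) k`!) polyCV mulrAC -polyCM mul_polyC.
by [].
Qed.

Lemma Pf_polyC (c : C) k : Pf c%:P k = (Pf c k)%:P.
Proof.
rewrite /Pf rmorph_prod; apply: eq_bigr => i _.
by rewrite rmorphB /= rmorph_nat.
Qed.

Lemma Pf_comp (u q : {poly C}) k : (Pf u k) \Po q = Pf (u \Po q) k.
Proof.
elim: k => [|k IH]; first by rewrite !Pf0 -polyC1 comp_polyC.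
have hk : (k%:R : {poly C}) \Po q = k%:R by rewrite -(rmorph_nat (@polyC C)) comp_polyC.
by rewrite !PfS comp_polyM IH comp_polyB hk.
Qed.

Lemma z_shift (c : C) : z \Po ('X + c%:P) = z + (l^-1 * c)%:P.
Proof. by rewrite /z comp_polyZ comp_polyX scalerDr polyCM mul_polyC. Qed.

Lemma e_shift_l k : e k.+1 \Po ('X + l%:P) - e k.+1 = l *: e k.
Proof.
rewrite !eE comp_polyZ Pf_comp z_shift mulVf ?hl // polyC1 PfS1 PfS -scalerBr.
have -> : (z + 1) * Pf z k - Pf z k * (z - k%:R) = k.+1%:R * Pf z k.
  by rewrite -natr1; move: (Pf z k) (k%:R : {poly C}) => P K; ring.
rewrite mulr_natl -scaler_nat !scalerA; congr (_ *: _).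
rewrite /ce factS natrM exprS.
have h1 : (k.+1%:R : C) != 0 by rewrite pnatr_eq0.
have h2 := fact_neq0 k.
field.
by rewrite h2 addrC natr1 h1.
Qed.

Lemma Lq N (q : {poly C}) : (0 < N)%N -> (size q <= N)%N ->
  actQ (T N (f_series lam)) q = l^-1 *: (q \Po ('X + l%:P) - q).
Proof.
move=> hN hq; rewrite actQ_T // -(taylorS l hq).
case: N hN hq => // N _ hq.
rewrite [in RHS]big_ord_recl.
rewrite (_ : (l ^+ 0 / 0`!%:R) *: q^`(0) = q); last by rewrite expr0 fact0 divr1 scale1r.
rewrite addrAC subrr add0r big_ord_recl.
rewrite (_ : f_series lam ord0 = 0) ?scale0r ?add0r; last first.
  by rewrite /f_series /fps_scale /fps_sub /fps_exp /fps_one /= expr0 fact0 divr1 subrr mulr0.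
rewrite scaler_sumr; apply: eq_bigr => i _.
by rewrite /f_series /fps_scale /fps_sub /fps_one lift0 /= subr0 scalerA.
Qed.

Lemma e0 : e 0 = 1.
Proof. by rewrite eE Pf0 /ce expr0 fact0 divr1 scale1r. Qed.

Lemma e_at0 k : (e k).[0] = (k == 0)%:R.
Proof.
case: k => [|k]; first by rewrite e0 hornerC.
rewrite eE hornerZ /Pf big_ord_recl hornerM (_ : (z - _).[0] = 0) ?mul0r ?mulr0 //.
by rewrite hornerD hornerN /z hornerZ hornerX mulr0 -(rmorph_nat (@polyC C)) hornerC /= oppr0 addr0.
Qed.

Lemma size_z : (size z <= 2)%N.
Proof. by rewrite /z (leq_trans (size_scale_leq _ _)) // size_polyX. Qed.

Lemma size_Pf k : (size (Pf z k) <= k.+1)%N.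
Proof.
elim: k => [|k IH]; first by rewrite Pf0 size_poly1.
rewrite PfS (leq_trans (size_polyMleq _ _)) //.
have h2 : leq (size (z - k%:R)) 2.
  rewrite (leq_trans (size_polyD _ _)) // geq_max size_z size_polyN.
  by rewrite -(rmorph_nat (@polyC C)) (leq_trans (size_polyC_leq1 _)).
by rewrite -subn1 leq_subLR (leq_trans (leq_add IH h2)) // add1n addnS addSn addn1.

Qed.

Lemma size_e k : (size (e k) <= k.+1)%N.
Proof. by rewrite eE (leq_trans (size_scale_leq _ _)) // size_Pf. Qed.

Lemma L_e N k : (k.+2 <= N)%N -> actQ (T N (f_series lam)) (e k.+1) = e k.
Proof.
move=> hk; rewrite Lq ?(leq_trans (size_e _)) // ?(leq_trans _ hk) //.
by rewrite e_shift_l scalerA mulVf ?hl // scale1r.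
Qed.

Lemma L_e0 N : (0 < N)%N -> actQ (T N (f_series lam)) (e 0) = 0.
Proof.
move=> hN; rewrite Lq ?(leq_trans (size_e _)) // e0 -polyC1 comp_polyC.
by rewrite subrr scaler0.
Qed.

Lemma iterL N m k : (k < N)%N ->
  iter m (actQ (T N (f_series lam))) (e k) = if (m <= k)%N then e (k - m)%N else 0.
Proof.
move=> hk; elim: m => [|m IH]; first by rewrite subn0.
rewrite iterS IH.
case: (ltngtP m k) => hmk.
- have -> : (k - m = (k - m.+1).+1)%N by rewrite subnSK.
  rewrite L_e // subnSK //.
  by rewrite (leq_ltn_trans (leq_subr _ _) hk).
- by rewrite actQ0r.
- by rewrite hmk subnn L_e0 // (leq_ltn_trans (leq0n k)).
Qed.

Definition Bc n : C := fps_binpow l l^-1 n.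

Lemma Bc0 : Bc 0 = 1.
Proof. by rewrite /Bc /fps_binpow big_ord0 expr0 mulr1 fact0 divr1. Qed.

Lemma E1_e N k : (k < N)%N -> actQ (T N (fps_exp 1)) (e k) = conv Bc e k.
Proof.
move=> hk; rewrite actQ_T ?(leq_trans (size_e k)) //.
rewrite (taylorS (1 : C) (leq_trans (size_e k) hk)).
rewrite eE comp_polyZ Pf_comp z_shift mulr1 vandermonde scaler_sumr /conv.
apply: eq_bigr => n _; rewrite eE Pf_polyC mul_polyC scalerMnl !scalerA.
congr (_ *: _).
have hn : (n <= k)%N by rewrite -ltnS.
rewrite -mulr_natr /Bc /fps_binpow /ce -/(Pf _ _).
have hb : ('C(k, n)%:R : C) = k`!%:R / (n`!%:R * (k - n)`!%:R).
  by rewrite -(bin_fact hn) !natrM mulfK // mulf_neq0 // fact_neq0.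
have hlk : l ^+ k = l ^+ n * l ^+ (k - n) by rewrite -exprD subnKC.
rewrite hb hlk.
have h1 := fact_neq0 k; have h2 := fact_neq0 n; have h3 := fact_neq0 (k - n).
field.
by rewrite h1 h2 h3.
Qed.

Definition NBs : fps C := fps_divt (fps_sub (fps_binpow l l^-1) (@fps_one C)).

Lemma NBs0 : NBs 0 = 1.
Proof.
have f1 : (1`!%:R : C) = 1 by [].
rewrite /NBs /fps_divt /fps_sub /fps_binpow /fps_one /= big_ord1 expr1 subr0.
by rewrite f1 divr1 subr0 mulfV ?hl.
Qed.

Lemma NBsS n : NBs n = Bc n.+1.
Proof. by rewrite /NBs /fps_divt /fps_sub /fps_one /= subr0. Qed.

Local Notation Gp N := (T N (g_series lam)).
Local Notation Fp N := (T N (f_series lam)).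
Local Notation E1 N := (T N (fps_exp (1 : C))).

Lemma fps_exp0 (c : C) : fps_exp c 0 = 1.
Proof. by rewrite /fps_exp expr0 fact0 divr1. Qed.

Lemma GF N : (0 < N)%N -> eqN N (Gp N * Fp N) (E1 N - 1).
Proof.
move=> hN.
set U := fps_divt (fps_sub (fps_exp 1) (@fps_one C)).
set W := fps_divt (fps_sub (fps_exp l) (@fps_one C)).
have hG : eqN N (Gp N) ((l *: T N U) * T N (fps_inv W)).
  by rewrite -T_scale; apply: eqN_sym; apply: T_mul.
have hF : eqN N (Fp N) (l^-1 *: ('X * T N W)).
  rewrite /f_series T_scale; apply: eqNZ; apply: eqN_sym; apply: T_divt.
  by rewrite /fps_sub fps_exp0 /fps_one subrr.
have hE : eqN N ('X * T N U) (E1 N - 1).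
  rewrite -(@T_one _ N hN) -T_sub; apply: T_divt.
  by rewrite /fps_sub fps_exp0 /fps_one subrr.
have hW : W 0%N != 0.
  have f1 : (1`!%:R : C) = 1 by [].
  by rewrite /W /fps_divt /fps_sub /fps_exp /fps_one /= expr1 f1 divr1 subr0 hl.
have H2 : eqN N (((l *: T N U) * T N (fps_inv W)) * (l^-1 *: ('X * T N W))) (E1 N - 1).
  have -> : (l *: T N U) * T N (fps_inv W) * (l^-1 *: ('X * T N W)) =
            ('X * T N U) * (T N W * T N (fps_inv W)).
    transitivity ((l%:P * l^-1%:P) * ('X * T N U * (T N W * T N (fps_inv W)))).
      by rewrite -!mul_polyC !mulrA perm6.
    by rewrite -polyCM mulfV ?hl // mul1r.
  have H3 : eqN N ('X * T N U * (T N W * T N (fps_inv W))) ('X * T N U * 1) :=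
    eqNM (eqN_refl _) (T_inv hW).
  rewrite mulr1 in H3; exact: (eqN_trans H3 hE).
exact: (eqN_trans (eqNM hG hF) H2).
Qed.

Lemma Gp0 N : (0 < N)%N -> (Gp N)`_0 = 1.
Proof.
move=> hN; rewrite coefT // /g_series /fps_mul big_ord1 /fps_scale.
have f1 : (1`!%:R : C) = 1 by [].
rewrite /fps_divt /fps_sub /fps_exp /fps_one /fps_inv /= !expr1 f1 !divr1 !subr0.
by rewrite mulr1 mulfV ?hl.
Qed.

Lemma Fp0 N : (0 < N)%N -> (Fp N)`_0 = 0.
Proof.
move=> hN; rewrite coefT // /f_series /fps_scale /fps_sub /fps_one fps_exp0 /=.
by rewrite subrr mulr0.
Qed.

Lemma Fp1 N : (1 < N)%N -> (Fp N)`_1 = 1.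
Proof.
move=> hN; rewrite coefT // /f_series /fps_scale /fps_sub /fps_one /fps_exp /=.
have f1 : (1`!%:R : C) = 1 by [].
by rewrite expr1 f1 divr1 subr0 mulVf ?hl.
Qed.

Local Notation NB N := (T N NBs).

Lemma G_e N m : (m.+2 <= N)%N ->
  actQ (Gp N) (e m) = conv (fun i => (NB N)`_i) e m.
Proof.
move=> hm.
have hN : (0 < N)%N by rewrite (leq_trans _ hm).
rewrite -(L_e hm) -actQM (actQ_eqN (GF hN)) ?(leq_trans (size_e _)) //.
have hN1 : (-1 : {poly C}) = (-1)%:P by rewrite polyCN polyC1.
rewrite actQDl hN1 actQC scaleN1r E1_e; last by apply: leq_trans hm.
rewrite /conv big_ord_recl Bc0 scale1r subn0 addrAC subrr add0r.
apply: eq_bigr => i _; rewrite lift0 subSS coefT ?NBsS //.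
by rewrite (leq_trans _ hm) // ltnS ltnW // (leq_trans (ltn_ord i)).
Qed.

Lemma conv_eqN N (H H' : {poly C}) E k : (k < N)%N -> eqN N H H' ->
  conv (fun i => H`_i) E k = conv (fun i => H'`_i) E k.
Proof.
move=> hk hH; apply: eq_bigr => i _; rewrite hH //.
exact: leq_trans (ltn_ord i) hk.
Qed.

Lemma conv_one E k : conv (fun i => (1 : {poly C})`_i) E k = E k.
Proof.
rewrite /conv big_ord_recl coef1 /= scale1r subn0 big1 ?addr0 // => i _.
by rewrite coef1 /bump /= scale0r.
Qed.

Lemma G_conv N (H : {poly C}) k : (k.+2 <= N)%N ->
  actQ (Gp N) (conv (fun i => H`_i) e k) = conv (fun i => (H * NB N)`_i) e k.
Proof.
move=> hk.
rewrite /conv actQ_sumr (eq_bigr (fun i : 'I_k.+1 => H`_i *: conv (fun j => (NB N)`_j) e (k - i)%N)); last first.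
  move=> i _; rewrite actQZr G_e //.
  by rewrite (leq_trans _ hk) // !ltnS leq_subr.
have := conv_assoc (fun i => H`_i) (fun j => (NB N)`_j) e k.
rewrite /conv => ->.
by apply: eq_bigr => m _; rewrite coefM.
Qed.

Lemma G_pow_conv N (H : {poly C}) j k : (k.+2 <= N)%N ->
  actQ (Gp N ^+ j) (conv (fun i => H`_i) e k) = conv (fun i => (H * NB N ^+ j)`_i) e k.
Proof.
move=> hk; elim: j => [|j IH].
  by rewrite !expr0 mulr1 -polyC1 actQC scale1r.
by rewrite exprS actQM IH G_conv // exprSr mulrA.
Qed.

Variable r : nat.

Lemma A_Phi N k : (k.+2 <= N)%N ->
  actQ (Gp N ^+ r) (conv (fps_pow (bern_kernel lam) r) e k) = e k.
Proof.
move=> hk.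
have hkN : (k < N)%N by apply: leq_trans hk; rewrite ltnW.
have -> : conv (fps_pow (bern_kernel lam) r) e k =
          conv (fun i => (T N (fps_pow (bern_kernel lam) r))`_i) e k.
  apply: eq_bigr => i _; rewrite coefT //.
  exact: leq_trans (ltn_ord i) hkN.
rewrite G_pow_conv //.
have hNB : NBs 0%N != 0 by rewrite NBs0 oner_eq0.
have H1 : eqN N (T N (fps_pow (bern_kernel lam) r) * NB N ^+ r)
                (T N (bern_kernel lam) ^+ r * NB N ^+ r).
  exact: (eqNM (eqN_sym (T_pow (N := N) (bern_kernel lam) r)) (eqN_refl _)).
have H2 : eqN N (T N (bern_kernel lam) ^+ r * NB N ^+ r) 1.
  rewrite -exprMn mulrC.
  have H3 := eqNX r (T_inv (N := N) hNB).
  by rewrite expr1n in H3.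
by rewrite (conv_eqN _ hkN (eqN_trans H1 H2)) conv_one.
Qed.

Lemma size_iterF N m (q : {poly C}) : (1 < N)%N -> size (actQ (Fp N ^+ m) q) = (size q - m)%N.
Proof.
move=> hN; elim: m => [|m IH]; first by rewrite expr0 -polyC1 actQC scale1r subn0.
rewrite exprS actQM size_actQ_pred ?IH ?subnS // ?Fp0 ?Fp1 ?oner_eq0 //.
exact: ltnW.
Qed.

Lemma newton n (q : {poly C}) : (size q <= n.+1)%N ->
  q = \sum_(k < n.+1) (actQ (Fp n.+2 ^+ k) q).[0] *: e k.
Proof.
move=> hq.
set c := fun k : nat => (actQ (Fp n.+2 ^+ k) q).[0].
apply/eqP; rewrite -subr_eq0.
set d := q - _.
have hd m : (m <= n)%N -> (actQ (Fp n.+2 ^+ m) d).[0] = 0.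
  move=> hm; rewrite /d actQBr actQ_sumr hornerD hornerN [(\sum_(i < n.+1) _).[0]]horner_sum.
  rewrite (eq_bigr (fun k : 'I_n.+1 => if (k == m :> nat) then c k else 0)); last first.
    move=> k _; rewrite actQZr hornerZ (@actQ_exp _ _ m (e k)) iterL; last first.
      exact: (leq_trans (ltn_ord k)).
    case: (ltngtP k m) => h.
    - by rewrite ?horner0 ?mulr0.
    - by rewrite e_at0 subn_eq0 leqNgt h mulr0.
    - by rewrite h subnn e_at0 mulr1.
  by rewrite -big_mkcond big_ord1_eq ltnS hm subrr.
have hsd : (size d <= n.+1)%N.
  rewrite /d (leq_trans (size_polyD _ _)) // geq_max hq size_polyN /=.
  apply: (big_ind (fun u : {poly C} => size u <= n.+1)%N) => //; first by rewrite size_poly0.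
    by move=> u v hu hv; rewrite (leq_trans (size_polyD _ _)) // geq_max hu hv.
  by move=> k _; rewrite (leq_trans (size_scale_leq _ _)) // (leq_trans (size_e k)) // ltn_ord.
apply: contraT => nz.
set s := (size d).-1.
have hs : (s <= n)%N by rewrite /s -subn1 leq_subLR add1n.
have hsz : size (actQ (Fp n.+2 ^+ s) d) = 1%N.
  by rewrite size_iterF // {1}(polySpred nz) /s subSn // subnn.
have : lead_coef (actQ (Fp n.+2 ^+ s) d) != 0.
  by rewrite lead_coef_eq0 -size_poly_eq0 hsz.
by rewrite lead_coefE hsz /= -horner_coef0 hd // eqxx.
Qed.

Lemma coef0_exp (h : {poly C}) j : (h ^+ j)`_0 = h`_0 ^+ j.
Proof.
elim: j => [|j IH]; first by rewrite !expr0 coef1.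
by rewrite !exprS coef0M IH.
Qed.

Lemma core n (p : {poly C}) : (size p <= n.+1)%N ->
  p = \sum_(k < n.+1) (actQ (Gp n.+2 ^+ r * Fp n.+2 ^+ k) p).[0] *:
        conv (fps_pow (bern_kernel lam) r) e k.
Proof.
move=> hp.
have hA0 : (Gp n.+2 ^+ r)`_0 != 0 by rewrite coef0_exp Gp0 // expr1n oner_eq0.
apply/eqP; rewrite -subr_eq0 -size_poly_eq0 -(size_actQ_eq _ hA0) size_poly_eq0.
rewrite actQBr actQ_sumr.
rewrite (eq_bigr (fun k : 'I_n.+1 =>
   (actQ (Fp n.+2 ^+ k) (actQ (Gp n.+2 ^+ r) p)).[0] *: e k)); last first.
  move=> k _; rewrite actQZr A_Phi; last by rewrite !ltnS -ltnS.
  by rewrite mulrC actQM.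
rewrite -(newton (q := actQ (Gp n.+2 ^+ r) p)) ?subrr //.
exact: (leq_trans (size_actQ_le _ _) hp).
Qed.

Lemma E1_act N (v : {poly C}) : (size v <= N)%N -> actQ (E1 N) v = v \Po ('X + 1%:P).
Proof. by move=> hv; rewrite actQ_T // taylorS. Qed.

Lemma shift_iter N (v : {poly C}) j x : (size v <= N)%N ->
  (iter j (actQ (E1 N)) v).[x] = v.[x + j%:R].
Proof.
move=> hv; elim: j x => [|j IH] x; first by rewrite addr0.
rewrite iterS E1_act; last by rewrite -actQ_exp (leq_trans (size_actQ_le _ _)).
rewrite horner_comp hornerD hornerX hornerC IH.
by rewrite -natr1 addrA addrAC.
Qed.

Lemma coef_shift N (H : {poly C}) m (q : {poly C}) : (size q <= N)%N ->
  (actQ ((E1 N - 1) ^+ m * H) q).[0] =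
  \sum_(j < m.+1) (-1) ^+ (m - j)%N * 'C(m, j)%:R * (actQ H q).[j%:R].
Proof.
move=> hq.
rewrite addrC exprDn mulr_suml actQ_suml horner_sum; apply: eq_bigr => j _.
have hs : ((-1) ^+ (m - j)%N : {poly C}) = ((-1) ^+ (m - j)%N)%:P.
  by rewrite polyC_exp polyCN polyC1.
rewrite mulrnAl actQMnl hornerMn hs -[_ * _ * H]mulrA mul_polyC actQZl hornerZ actQM actQ_exp.
rewrite shift_iter ?add0r; last by rewrite (leq_trans (size_actQ_le _ _)).
by rewrite -mulr_natr mulrAC.
Qed.
End Main.



Section Final.
Variable R : realType.
Variable lam : R.
Hypothesis hlam : lam != 0.
Variables r n : nat.
Variable p : {poly R[i]}.
Hypothesis hp : size p = n.+1.
Local Notation N := n.+2.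
Local Notation Gp := (T N (g_series lam)).
Local Notation Fp := (T N (f_series lam)).
Local Notation e := (deg_exp_x lam).

Lemma hpN : (size p <= N)%N.
Proof. by rewrite hp. Qed.

Lemma degbE k : deg_bernoulli lam r k = k`!%:R *: conv (fps_pow (bern_kernel lam) r) e k.
Proof.
rewrite /deg_bernoulli /fps_mul /conv; congr (_ *: _); apply: eq_bigr => i _.
by rewrite mul_polyC.
Qed.

Lemma actpow (a : fps R[i]) j : fps_act (fps_pow a j) p = actQ (T N a ^+ j) p.
Proof.
rewrite (fps_actE _ hpN).
exact: (actQ_eqN (eqN_sym (T_pow a j)) hpN).
Qed.

Lemma termA k : (k < r)%N ->
  ((k`!%:R)^-1 * \sum_(j < k.+1) (-1) ^+ (k - j)%N * 'C(k, j)%:R *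
       (fps_act (fps_pow (g_series lam) (r - k)%N) p).[j%:R]) *: deg_bernoulli lam r k
  = (actQ (Gp ^+ r * Fp ^+ k) p).[0] *: conv (fps_pow (bern_kernel lam) r) e k.
Proof.
move=> hk.
have -> : Gp ^+ r * Fp ^+ k = Gp ^+ (r - k) * (Gp * Fp) ^+ k.
  by rewrite exprMn mulrA -exprD subnK // ltnW.
rewrite (actQ_eqN (eqNM (eqN_refl _) (eqNX k (GF hlam (N := N) (ltn0Sn _)))) hpN).
rewrite (mulrC (Gp ^+ (r - k))) coef_shift ?hpN //.
by rewrite actpow degbE scalerA mulrAC mulVf ?mul1r // fact_neq0.
Qed.

Lemma termB k : (r <= k)%N ->
  ((k`!%:R)^-1 * \sum_(j < r.+1) (-1) ^+ (r - j)%N * 'C(r, j)%:R *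
       (fps_act (fps_pow (f_series lam) (k - r)%N) p).[j%:R]) *: deg_bernoulli lam r k
  = (actQ (Gp ^+ r * Fp ^+ k) p).[0] *: conv (fps_pow (bern_kernel lam) r) e k.
Proof.
move=> hk.
have -> : Gp ^+ r * Fp ^+ k = (Gp * Fp) ^+ r * Fp ^+ (k - r).
  by rewrite -{1}(subnKC hk) exprD mulrA exprMn.
rewrite (actQ_eqN (eqNM (eqNX r (GF hlam (N := N) (ltn0Sn _))) (eqN_refl _)) hpN).
rewrite coef_shift ?hpN //.
by rewrite actpow degbE scalerA mulrAC mulVf ?mul1r // fact_neq0.
Qed.
End Final.

Unset Implicit Arguments.

Theorem theorem4p1 (R : realType) (lam : R) (hlam : lam != 0)
    (r n : nat) (p : {poly R[i]}) (hp : size p = n.+1) :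
  ((n < r)%N ->
   p = \sum_(k < n.+1)
         ((k`!%:R)^-1 *
          \sum_(j < k.+1) (-1) ^+ (k - j)%N * 'C(k, j)%:R *
             (fps_act (fps_pow (g_series lam) (r - k)%N) p).[j%:R])
         *: deg_bernoulli lam r k)
  /\
  ((r <= n)%N ->
   p = \sum_(k < r)
         ((k`!%:R)^-1 *
          \sum_(j < k.+1) (-1) ^+ (k - j)%N * 'C(k, j)%:R *
             (fps_act (fps_pow (g_series lam) (r - k)%N) p).[j%:R])
         *: deg_bernoulli lam r k
       + \sum_(r <= k < n.+1)
         ((k`!%:R)^-1 *
          \sum_(j < r.+1) (-1) ^+ (r - j)%N * 'C(r, j)%:R *
             (fps_act (fps_pow (f_series lam) (k - r)%N) p).[j%:R])
         *: deg_bernoulli lam r k).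
Proof.
have hpn : (size p <= n.+1)%N by rewrite hp.
have E := core hlam r hpn.
split => hr.
  rewrite {1}E; apply: eq_bigr => k _; rewrite (termA hlam hp) //.
  exact: leq_trans (ltn_ord k) hr.
set F := fun k : nat => (actQ (T n.+2 (g_series lam) ^+ r * T n.+2 (f_series lam) ^+ k) p).[0] *:
  conv (fps_pow (bern_kernel lam) r) (deg_exp_x lam) k.
have E' : p = \sum_(k < n.+1) F k := E.
rewrite {1}E' -(big_mkord (fun _ => true) F) (@big_cat_nat _ _ _ r 0 n.+1) //=; last exact: leqW.
rewrite big_mkord; congr (_ + _).
  by apply: eq_bigr => k _; rewrite (termA hlam hp) // (leq_trans (ltn_ord k)).
by apply: eq_big_nat => k /andP [hrk hkn]; rewrite (termB hlam hp).
Qed.
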